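(* Let $\alpha\in\mathbb{R}$ be fixed and let $\phi\colon\, ]0,+\infty[\,\to\mathbb{R}$ be a function such that (a) $\phi$ is $\mathbb{Q}$-homogeneous of order $\alpha$, i.e. $\phi(rx)=r^{\alpha}\phi(x)$ for all $x\in\,]0,+\infty[$ and all $r\in\mathbb{Q}\cap\,]0,+\infty[$; and (b) $\phi$ is continuous at some point of $]0,+\infty[$. Then $\phi$ is continuous at every point of $]0,+\infty[$. *)

(* Defs.v *)
From Stdlib Require Import Reals QArith.
Open Scope R_scope.

Definition Q_homogeneous (alpha : R) (phi : R -> R) : Prop :=
  forall (x : R) (r : Q), 0 < x -> 0 < Q2R r ->
    phi (Q2R r * x) = Rpower (Q2R r) alpha * phi x.

(* Main.v *)
Require Import Defs.
From Stdlib Require Import Reals QArith Lra Lia.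
Open Scope R_scope.

Lemma dense_Q (t d : R) : 0 < d -> exists q : Q, t < Q2R q < t + d.
Proof.
  intros Hd.
  destruct (archimed (/ d)) as [H1 H2].
  assert (Hpos : (0 < up (/ d))%Z).
  { apply lt_IZR. assert (0 < / d) by (apply Rinv_0_lt_compat; lra). lra. }
  set (p := Z.to_pos (up (/ d))).
  assert (Hp : IZR (Zpos p) = IZR (up (/ d))) by (unfold p; rewrite Z2Pos.id; auto).
  set (n := IZR (Zpos p)) in *.
  assert (Hn : / d < n) by lra.
  assert (Hn0 : 0 < n) by (assert (0 < / d) by (apply Rinv_0_lt_compat; lra); lra).
  destruct (archimed (t * n)) as [H3 H4].
  exists (Qmake (up (t * n)) p).
  unfold Q2R; simpl. fold n.
  split.
  - apply (Rmult_lt_reg_r n); [lra|]. rewrite Rmult_assoc, Rinv_l by lra. lra.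
  - apply (Rmult_lt_reg_r n); [lra|]. rewrite Rmult_assoc, Rinv_l by lra.
    rewrite Rmult_plus_distr_r.
    assert (1 < d * n).
    { apply (Rmult_lt_compat_l d) in Hn; [|lra]. rewrite Rinv_r in Hn by lra. lra. }
    lra.
Qed.

Lemma const_on_Q (f : R -> R) (t c : R) : 0 < t -> continuity_pt f t ->
  (forall q : Q, 0 < Q2R q -> f (Q2R q) = c) -> f t = c.
Proof.
  intros Ht Hc Hq.
  destruct (Req_dec (f t) c) as [E|E]; auto. exfalso.
  assert (He : 0 < Rabs (f t - c)) by (apply Rabs_pos_lt; lra).
  destruct (Hc _ He) as [a [Ha Hy]].
  destruct (dense_Q t a Ha) as [q [Hq1 Hq2]].
  assert (Hd : R_dist (f (Q2R q)) (f t) < Rabs (f t - c)).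
  { apply Hy. split.
    - split; [exact I|]. lra.
    - simpl. unfold R_dist. rewrite Rabs_right; lra. }
  rewrite Hq in Hd by lra. unfold R_dist, Rdist in Hd; simpl in Hd.
  rewrite <- Rabs_Ropp in Hd. replace (- (c - f t)) with (f t - c) in Hd by ring. lra.
Qed.

Lemma cont_pow (a t : R) : 0 < t -> continuity_pt (fun x => Rpower x a) t.
Proof.
  intros Ht. apply derivable_continuous_pt.
  exists (a * Rpower t (a - 1)). apply derivable_pt_lim_power; auto.
Qed.

Theorem mainTheorem1 (alpha : R) (phi : R -> R) :
  Q_homogeneous alpha phi ->
  (exists x0 : R, 0 < x0 /\ continuity_pt phi x0) ->
  forall x : R, 0 < x -> continuity_pt phi x.
Proof.
  intros Hh [x0 [Hx0 Hc]].
  assert (Key : forall y, 0 < y -> phi y = Rpower (y / x0) alpha * phi x0).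
  { intros y Hy.
    set (g := fun t => Rpower t alpha * phi (y * / t)).
    assert (Ht0 : 0 < y / x0) by (apply Rdiv_lt_0_compat; auto).
    assert (Hg : g (y / x0) = phi y).
    { apply const_on_Q; auto.
      - unfold g. apply (continuity_pt_mult (fun t => Rpower t alpha) (fun t => phi (y * / t))).
        + apply cont_pow; auto.
        + apply (continuity_pt_comp (fun t => y * / t) phi).
          * apply continuity_pt_mult. apply continuity_pt_const; intros ? ?; auto.
            apply (continuity_pt_inv (fun t => t)). apply derivable_continuous_pt, derivable_pt_id.
            lra.
          * replace (y * / (y / x0)) with x0 by (field; lra). exact Hc.
      - intros q Hq. unfold g.
        rewrite <- Hh; [| apply Rmult_lt_0_compat; [lra| apply Rinv_0_lt_compat; lra] | lra].
        f_equal. field. lra. }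
    rewrite <- Hg. unfold g. f_equal. f_equal. field. lra. }
  intros x Hx.
  apply (continuity_pt_locally_ext (fun y => Rpower (y / x0) alpha * phi x0) phi x x).
  - exact Hx.
  - intros y Hy. unfold Rdist in Hy. symmetry; apply Key.
    apply Rabs_def2 in Hy. destruct Hy; lra.
  - apply continuity_pt_mult; [| apply continuity_pt_const; intros ? ?; auto].
    apply (continuity_pt_comp (fun y => y / x0) (fun z => Rpower z alpha)).
    + unfold Rdiv. apply continuity_pt_mult. apply derivable_continuous_pt, derivable_pt_id.
      apply continuity_pt_const; intros ? ?; auto.
    + apply cont_pow. apply Rdiv_lt_0_compat; auto.
Qed.
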